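(* Let $f\in C^1[0,1]$ with $f(0)=0$, $h:=f'$, $q$ satisfying (q), and assume that $q$ is (left-)differentiable at $1$ with $\dot q(1)\in(-\infty,0]$. Let $c\ge c^*$ and let $z$ be a solution of $(P_c)$. Then the left derivative $\dot z(1)=\lim_{\varphi\to1^-}\frac{z(\varphi)-z(1)}{\varphi-1}$ exists, and: (i) if $z(1)<0$, then $\dot z(1)=h(1)-c$; (ii) if $z(1)=0$, then $\dot z(1)=\frac12\big[h(1)-c+\sqrt{(h(1)-c)^2-4\dot q(1)}\big]$ when $\dot q(1)<0$, and $\dot z(1)=\max\{0,h(1)-c\}$ when $\dot q(1)=0$.
   Context: Condition (q): $q\in C[0,1]$, $q>0$ on $(0,1)$, $q(0)=q(1)=0$, and $\limsup_{\varphi\to0^+}q(\varphi)/\varphi<+\infty$. For $c\in\mathbb R$, a solution of problem $(P_c)$ is a function $z\in C[0,1]\cap C^1(0,1)$ with $\dot z(\varphi)=h(\varphi)-c-q(\varphi)/z(\varphi)$ and $z(\varphi)<0$ for all $\varphi\in(0,1)$, and $z(0)=0$. $c^*$ denotes the real number such that $(P_c)$ has a solution with $z(1)=0$ iff $c\ge c^*$. *)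

(* Defs.v *)
From Stdlib Require Import Reals.
From Coquelicot Require Import Coquelicot.
Open Scope R_scope.

Definition I01 (x : R) : Prop := 0 <= x <= 1.

Definition cont01 (g : R -> R) : Prop :=
  forall x, I01 x -> filterlim g (within I01 (locally x)) (locally (g x)).

Definition C1_01 (f h : R -> R) : Prop :=
  (forall x, 0 < x < 1 -> is_derive f x (h x)) /\
  filterlim (fun y => (f y - f 0) / (y - 0)) (at_right 0) (locally (h 0)) /\
  filterlim (fun y => (f y - f 1) / (y - 1)) (at_left 1) (locally (h 1)) /\
  cont01 h.

Definition cond_q (q : R -> R) : Prop :=
  cont01 q /\
  (forall x, 0 < x < 1 -> 0 < q x) /\
  q 0 = 0 /\ q 1 = 0 /\
  (* limsup_{phi -> 0+} q(phi)/phi < +oo *)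
  (exists M delta, 0 < delta /\ forall x, 0 < x < delta -> q x / x <= M).

(* z is a solution of (P_c): z in C[0,1] /\ C^1(0,1), with
   z' = h - c - q/z and z < 0 on (0,1), and z(0) = 0.
   (The derivative equals a function continuous on (0,1), so C^1(0,1)
   is encoded by the pointwise derivative condition.) *)
Definition solP (h q : R -> R) (c : R) (z : R -> R) : Prop :=
  cont01 z /\
  (forall x, 0 < x < 1 -> is_derive z x (h x - c - q x / z x)) /\
  (forall x, 0 < x < 1 -> z x < 0) /\
  z 0 = 0.

(* Main.v *)
Require Import Defs.
From Stdlib Require Import Reals Lra Psatz.
From Coquelicot Require Import Coquelicot.
Open Scope R_scope.

Lemma ballR (x e y : R) : ball x e y <-> Rabs (y - x) < e.
Proof. reflexivity. Qed.

Lemma left_eps f L : filterlim f (at_left 1) (locally L) ->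
  forall eps, 0 < eps -> exists eta, 0 < eta /\ forall x, 1 - eta < x < 1 -> Rabs (f x - L) < eps.
Proof.
  intros H eps He. destruct (proj1 (filterlim_locally f L) H (mkposreal eps He)) as [d Hd].
  exists d. split. apply cond_pos. intros x Hx. apply (Hd x).
  apply ballR. rewrite Rabs_left; simpl; lra. lra.
Qed.

Lemma within_eps f L : filterlim f (within (fun x => 0 <= x <= 1) (locally 1)) (locally L) ->
  forall eps, 0 < eps -> exists eta, 0 < eta /\ forall x, 1 - eta < x < 1 -> Rabs (f x - L) < eps.
Proof.
  intros H eps He. destruct (proj1 (filterlim_locally f L) H (mkposreal eps He)) as [d Hd].
  exists (Rmin d 1). split. apply Rmin_pos; [apply cond_pos|lra]. intros x Hx.
  assert (Rmin d 1 <= d) by apply Rmin_l. assert (Rmin d 1 <= 1) by apply Rmin_r.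
  apply (Hd x). apply ballR. rewrite Rabs_left; simpl; lra. lra.
Qed.

Lemma eps_left f L : (forall eps, 0 < eps -> exists eta, 0 < eta /\ forall x, 1 - eta < x < 1 -> Rabs (f x - L) <= eps) ->
  filterlim f (at_left 1) (locally L).
Proof.
  intros H. apply filterlim_locally. intros [e He].
  destruct (H (e/2)) as [d [Hd Hd']]; [lra|].
  exists (mkposreal d Hd). intros y Hy Hy1. apply ballR in Hy. simpl in *.
  apply ballR. apply Rabs_def2 in Hy. unfold minus, plus, opp in Hy; simpl in Hy. assert (Rabs (f y - L) <= e/2) by (apply Hd'; lra). lra.
Qed.

Lemma lin_small A eps : 0 < eps -> exists eta, 0 < eta /\ forall x, 1 - eta < x < 1 -> Rabs (A * (x - 1)) < eps.
Proof.
  intros He. exists (eps / (Rabs A + 1)). assert (0 <= Rabs A) by apply Rabs_pos.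
  split. apply Rdiv_lt_0_compat; lra. intros x Hx.
  assert (E: eps / (Rabs A + 1) * (Rabs A + 1) = eps) by (field; lra).
  rewrite Rabs_mult, (Rabs_left (x-1)) by lra. nra.
Qed.

Lemma cmp G dG a : a < 1 -> (forall x, a < x < 1 -> is_derive G x (dG x)) ->
  (forall x, a < x < 1 -> 0 < G x -> 0 < dG x) ->
  (forall eps, 0 < eps -> exists eta, 0 < eta /\ forall x, 1 - eta < x < 1 -> G x < eps) ->
  forall x, a < x < 1 -> G x <= 0.
Proof.
  intros Ha Hd Hs Hl x0 Hx0. destruct (Rle_or_lt (G x0) 0) as [|Hp]; auto. exfalso.
  assert (Hc : forall y, a < y < 1 -> continuity_pt G y).
  { intros y Hy. apply continuity_pt_filterlim. apply (@ex_derive_continuous R_AbsRing R_NormedModule G y).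
    eexists; apply Hd; auto. }
  assert (Cl : forall t, x0 < t < 1 -> G x0 <= G t).
  { intros t Ht. destruct (Rle_or_lt (G x0) (G t)) as [|Hlt]; auto. exfalso.
    destruct (continuity_ab_maj G x0 t) as [M [HM1 HM2]]. lra.
    intros y Hy; apply Hc; lra.
    assert (G x0 <= G M) by (apply HM1; lra).
    assert (M < t). { destruct (Req_dec M t); [subst; lra | lra]. }
    assert (HcM := Hc M ltac:(lra)). apply continuity_pt_filterlim in HcM.
    destruct (proj1 (filterlim_locally G (G M)) HcM (mkposreal (G M) ltac:(lra))) as [d Hdd].
    set (s := Rmin t (M + d/2)).
    assert (s <= t) by apply Rmin_l. assert (s <= M + d/2) by apply Rmin_r.
    assert (M < s). { unfold s. apply Rmin_glb_lt; try lra. destruct d; simpl; lra. }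
    destruct (MVT_gen G M s dG) as [c [Hc1 Hc2]].
    - intros y Hy. rewrite Rmin_left in Hy by lra. rewrite Rmax_right in Hy by lra. apply Hd; lra.
    - intros y Hy. rewrite Rmin_left in Hy by lra. rewrite Rmax_right in Hy by lra. apply Hc; lra.
    - rewrite Rmin_left in Hc1 by lra. rewrite Rmax_right in Hc1 by lra.
      assert (Gc : 0 < G c).
      { assert (B := Hdd c). rewrite !ballR in B. simpl in B.
        assert (Hcm : Rabs (c - M) < d) by (rewrite Rabs_right; lra).
        specialize (B Hcm). apply Rabs_def2 in B. lra. }
      assert (0 < dG c) by (apply Hs; [lra|auto]).
      assert (G s <= G M) by (apply HM1; lra). nra. }
  destruct (Hl (G x0) Hp) as [eta [He Heta]].
  set (t := (Rmax x0 (1 - eta) + 1) / 2).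
  assert (x0 <= Rmax x0 (1-eta)) by apply Rmax_l. assert (1 - eta <= Rmax x0 (1-eta)) by apply Rmax_r.
  assert (Rmax x0 (1-eta) < 1) by (apply Rmax_lub_lt; lra).
  assert (G t < G x0) by (apply Heta; unfold t; lra).
  assert (G x0 <= G t) by (apply Cl; unfold t; lra). lra.
Qed.

Lemma der1 (y : R -> R) x dy A y1 : is_derive y x dy ->
  is_derive (fun x => A*(x-1) - (y x - y1)) x (A - dy).
Proof.
  intros H. 
  assert (H1 : is_derive (fun x => A*(x-1)) x A) by (auto_derive; [auto|ring]).
  assert (H2 : is_derive (fun x => y x - y1) x dy).
  { assert (K := is_derive_minus y (fun _ => y1) x dy 0 H (is_derive_const y1 x)).
    unfold minus, plus, opp in K; simpl in K. replace dy with (dy + - 0) by ring. exact K. }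
  exact (is_derive_minus _ _ x A dy H1 H2).
Qed.

Lemma der2 (y : R -> R) x dy A y1 : is_derive y x dy ->
  is_derive (fun x => (y x - y1) - A*(x-1)) x (dy - A).
Proof.
  intros H. 
  assert (H1 : is_derive (fun x => A*(x-1)) x A) by (auto_derive; [auto|ring]).
  assert (H2 : is_derive (fun x => y x - y1) x dy).
  { assert (K := is_derive_minus y (fun _ => y1) x dy 0 H (is_derive_const y1 x)).
    unfold minus, plus, opp in K; simpl in K. replace dy with (dy + - 0) by ring. exact K. }
  exact (is_derive_minus _ _ x dy A H2 H1).
Qed.

Lemma small2 (y : R -> R) y1 A :
  (forall eps, 0 < eps -> exists eta, 0 < eta /\ forall x, 1 - eta < x < 1 -> Rabs (y x - y1) < eps) ->
  forall eps, 0 < eps -> exists eta, 0 < eta /\ forall x, 1 - eta < x < 1 ->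
     Rabs (y x - y1) + Rabs (A * (x - 1)) < eps.
Proof.
  intros Hy eps He. destruct (Hy (eps/2)) as [e1 [He1 H1]]; [lra|].
  destruct (lin_small A (eps/2)) as [e2 [He2 H2]]; [lra|].
  exists (Rmin e1 e2). split. apply Rmin_pos; auto. intros x Hx.
  assert (Rmin e1 e2 <= e1) by apply Rmin_l. assert (Rmin e1 e2 <= e2) by apply Rmin_r.
  assert (Rabs (y x - y1) < eps/2) by (apply H1; lra).
  assert (Rabs (A*(x-1)) < eps/2) by (apply H2; lra). lra.
Qed.

Lemma divle A B x : x < 1 -> A * (x - 1) <= B -> B / (x - 1) <= A.
Proof.
  intros Hx H. assert (E : / (x-1) * (x-1) = 1) by (field; lra).
  assert (/ (x-1) < 0) by (apply Rinv_lt_0_compat; lra). unfold Rdiv.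
  assert (K : (B - A*(x-1)) * /(x-1) <= 0) by nra.
  assert (K2 : (B - A*(x-1)) * /(x-1) = B * /(x-1) - A * (/(x-1) * (x-1))) by ring.
  rewrite E in K2. lra.
Qed.

Lemma divge A B x : x < 1 -> B <= A * (x - 1) -> A <= B / (x - 1).
Proof.
  intros Hx H. assert (E : / (x-1) * (x-1) = 1) by (field; lra).
  assert (/ (x-1) < 0) by (apply Rinv_lt_0_compat; lra). unfold Rdiv.
  assert (K : 0 <= (B - A*(x-1)) * /(x-1)) by nra.
  assert (K2 : (B - A*(x-1)) * /(x-1) = B * /(x-1) - A * (/(x-1) * (x-1))) by ring.
  rewrite E in K2. lra.
Qed.

Lemma sq (y dy : R -> R) (y1 L d a : R) : a < 1 ->
  (forall x, a < x < 1 -> is_derive y x (dy x)) ->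
  (forall eps, 0 < eps -> exists eta, 0 < eta /\ forall x, 1 - eta < x < 1 -> Rabs (y x - y1) < eps) ->
  (forall x, a < x < 1 -> y x - y1 < (L + d) * (x - 1) -> dy x < L + d) ->
  (forall x, a < x < 1 -> y x - y1 > (L - d) * (x - 1) -> dy x > L - d) ->
  forall x, a < x < 1 -> L - d <= (y x - y1) / (x - 1) <= L + d.
Proof.
  intros Ha Hd Hy HU HL x Hx. split.
  - apply divge; [lra|].
    assert (K := cmp (fun x => (y x - y1) - (L-d)*(x-1)) (fun x => dy x - (L-d)) a Ha).
    cbv beta in K. cut ((y x - y1) - (L-d)*(x-1) <= 0). lra. apply K; auto.
    + intros t Ht. apply der2, Hd; auto.
    + intros t Ht Hp. assert (dy t > L - d) by (apply HL; lra). lra.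
    + intros eps He. destruct (small2 y y1 (L-d) Hy eps He) as [eta [He1 H1]].
      exists eta. split; auto. intros t Ht. specialize (H1 t Ht).
      assert (A1 := Rle_abs (y t - y1)). assert (A2 := Rabs_Ropp ((L-d)*(t-1))).
      assert (A3 := Rle_abs (- ((L-d)*(t-1)))). lra.
  - apply divle; [lra|].
    assert (K := cmp (fun x => (L+d)*(x-1) - (y x - y1)) (fun x => (L+d) - dy x) a Ha).
    cbv beta in K. cut ((L+d)*(x-1) - (y x - y1) <= 0). lra. apply K; auto.
    + intros t Ht. apply der1, Hd; auto.
    + intros t Ht Hp. assert (dy t < L + d) by (apply HU; lra). lra.
    + intros eps He. destruct (small2 y y1 (L+d) Hy eps He) as [eta [He1 H1]].
      exists eta. split; auto. intros t Ht. specialize (H1 t Ht).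
      assert (A1 := Rle_abs (- (y t - y1))). assert (A2 := Rabs_Ropp (y t - y1)).
      assert (A3 := Rle_abs ((L+d)*(t-1))). lra.
Qed.

Definition ev (P : R -> Prop) := exists eta, 0 < eta /\ forall x, 1 - eta < x < 1 -> P x.

Lemma ev_and P Q : ev P -> ev Q -> ev (fun x => P x /\ Q x).
Proof.
  intros [e1 [H1 K1]] [e2 [H2 K2]]. exists (Rmin e1 e2). split. apply Rmin_pos; auto.
  intros x Hx. assert (Rmin e1 e2 <= e1) by apply Rmin_l. assert (Rmin e1 e2 <= e2) by apply Rmin_r.
  split; [apply K1|apply K2]; lra.
Qed.

Lemma ev_pos : ev (fun x => 0 < x).
Proof. exists 1. split. lra. intros; lra. Qed.

Lemma ev_near e : 0 < e -> ev (fun x => 1 - x < e).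
Proof. intros. exists e. split; auto. intros; lra. Qed.

Lemma ev_mono (P Q : R -> Prop) : ev P -> (forall x, x < 1 -> P x -> Q x) -> ev Q.
Proof. intros [e [H K]] HPQ. exists e. split; auto. intros x Hx. apply HPQ; [lra|]. apply K; auto. Qed.

Lemma fin (z dz : R -> R) z1 L :
  (forall x, 0 < x < 1 -> is_derive z x (dz x)) ->
  (forall eps, 0 < eps -> exists eta, 0 < eta /\ forall x, 1 - eta < x < 1 -> Rabs (z x - z1) < eps) ->
  (forall d, 0 < d -> ev (fun x => (z x - z1 < (L + d) * (x - 1) -> dz x < L + d) /\
                                  (z x - z1 > (L - d) * (x - 1) -> dz x > L - d))) ->
  filterlim (fun x => (z x - z1) / (x - 1)) (at_left 1) (locally L).
Proof.
  intros Hd Hz Hb. apply eps_left. intros eps He.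
  destruct (ev_and _ _ ev_pos (Hb eps He)) as [eta [Heta K]].
  exists eta. split; auto. intros x Hx.
  set (a := Rmax (1 - eta) 0).
  assert (1 - eta <= a) by apply Rmax_l. assert (0 <= a) by apply Rmax_r.
  assert (a < 1) by (apply Rmax_lub_lt; lra).
  assert (P : 0 < x) by (apply K; auto).
  assert (a < x). { apply Rmax_lub_lt; lra. }
  assert (S := sq z dz z1 L eps a H1 ltac:(intros t Ht; apply Hd; lra) Hz
     ltac:(intros t Ht; apply (proj2 (K t ltac:(lra)))) ltac:(intros t Ht; apply (proj2 (K t ltac:(lra)))) x ltac:(lra)).
  apply Rabs_le; lra.
Qed.

Lemma upper_alg a a0 r s q x D d dq s0 : 0 < d -> 0 < D -> 0 <= s0 -> x < 1 -> 0 < r ->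
  r * s = q -> D * (1 - x) < s -> q < (- dq + d*d/(2*(D+1))) * (1 - x) ->
  a < a0 + d*d/(2*(D+1)) -> D*D - a0*D + dq = d*(s0+d) -> a + r < D.
Proof.
  intros. set (e := d*d/(2*(D+1))) in *.
  assert (Ee : e * (D+1) = d*d/2) by (unfold e; field; lra).
  assert (r*D*(1-x) < r*s) by nra.
  assert (K : (r*D - (-dq+e))*(1-x) < 0) by nra.
  assert (r*D < -dq + e) by nra.
  assert (a*D < (a0+e)*D) by nra.
  assert ((a+r)*D < D*D) by nra.
  nra.
Qed.

Lemma lower_alg a a0 r s q x E d dq s0 : 0 < d -> 0 < E -> d < s0 -> x < 1 -> 0 < r ->
  r * s = q -> s < E * (1 - x) -> (- dq - d*(s0-d)/(2*(E+1))) * (1 - x) < q ->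
  a0 - d*(s0-d)/(2*(E+1)) < a -> E*E - a0*E + dq = - d*(s0-d) -> E < a + r.
Proof.
  intros. set (e := d*(s0-d)/(2*(E+1))) in *.
  assert (Ee : e * (E+1) = d*(s0-d)/2) by (unfold e; field; lra).
  assert (r*s < r*E*(1-x)) by nra.
  assert (K : (r*E - (-dq-e))*(1-x) > 0) by nra.
  assert (r*E > -dq - e) by nra.
  assert (a*E > (a0-e)*E) by nra.
  assert ((a+r)*E > E*E) by nra.
  nra.
Qed.

Lemma lam_eq a0 s0 dq lam : s0 * s0 = a0 ^ 2 - 4 * dq -> lam = (a0+s0)/2 -> lam*lam - a0*lam + dq = 0.
Proof. intros. subst lam. nra. Qed.

Lemma key_eq a0 s0 dq lam d : lam*lam - a0*lam + dq = 0 -> 2*lam = a0 + s0 ->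
  (lam+d)*(lam+d) - a0*(lam+d) + dq = d*(s0+d) /\ (lam-d)*(lam-d) - a0*(lam-d) + dq = - d*(s0-d).
Proof. intros. split; nra. Qed.

Theorem proposition7p1 (f h q : R -> R) (dq cstar c : R) (z : R -> R) :
  C1_01 f h -> f 0 = 0 ->
  cond_q q ->
  filterlim (fun x => (q x - q 1) / (x - 1)) (at_left 1) (locally dq) ->
  dq <= 0 ->
  (forall c', (exists w, solP h q c' w /\ w 1 = 0) <-> cstar <= c') ->
  cstar <= c ->
  solP h q c z ->
  exists dz,
    filterlim (fun x => (z x - z 1) / (x - 1)) (at_left 1) (locally dz) /\
    (z 1 < 0 -> dz = h 1 - c) /\
    (z 1 = 0 ->
       (dq < 0 -> dz = / 2 * (h 1 - c + sqrt ((h 1 - c) ^ 2 - 4 * dq))) /\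
       (dq = 0 -> dz = Rmax 0 (h 1 - c))).
Proof.
  intros Cf f0 Cq Hdq dq0 _ _ Sol.
  destruct Sol as [zc [zd [zneg z0]]]. destruct Cq as [qc [qpos [q0 [q1 _]]]].
  destruct Cf as [_ [_ [_ hc]]].
  assert (Hz : forall eps, 0 < eps -> exists eta, 0 < eta /\ forall x, 1 - eta < x < 1 -> Rabs (z x - z 1) < eps).
  { apply within_eps. apply zc. unfold I01; lra. }
  assert (Hh : forall eps, 0 < eps -> ev (fun x => Rabs (h x - h 1) < eps)).
  { apply within_eps. apply hc. unfold I01; lra. }
  assert (Hq : forall eps, 0 < eps -> ev (fun x => Rabs (q x / (x - 1) - dq) < eps)).
  { intros eps He. destruct (left_eps _ _ Hdq eps He) as [eta [He1 K]]. exists eta. split; auto.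
    intros x Hx. specialize (K x Hx). rewrite q1, Rminus_0_r in K. exact K. }
  assert (Hqb : forall eps, 0 < eps -> ev (fun x => (- dq - eps) * (1 - x) < q x < (- dq + eps) * (1 - x))).
  { intros eps He. apply (ev_mono _ _ (Hq eps He)). intros x Hx K.
    set (m := q x / (x - 1)) in K. assert (E : q x = m * (x - 1)) by (unfold m; field; lra).
    apply Rabs_def2 in K. rewrite E. split; nra. }
  set (a0 := h 1 - c).
  assert (z1le : z 1 <= 0).
  { destruct (Rle_or_lt (z 1) 0) as [|Hp]; auto. exfalso.
    destruct (Hz (z 1) Hp) as [eta [He K]].
    set (x := Rmax (1 - eta/2) (1/2)).
    assert (1 - eta/2 <= x) by apply Rmax_l. assert (1/2 <= x) by apply Rmax_r.
    assert (x < 1) by (apply Rmax_lub_lt; lra).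
    specialize (K x ltac:(lra)). assert (z x < 0) by (apply zneg; lra).
    apply Rabs_def2 in K. lra. }
  destruct (Rlt_or_le (z 1) 0) as [z1n | z1z].
  - exists a0. split; [| split; intros; [reflexivity | lra]].
    apply (fin z (fun x => h x - c - q x / z x)); auto.
    intros d Hd.
    set (k := Rabs dq + 1).
    assert (Hk : 0 < k) by (unfold k; assert (0 <= Rabs dq) by apply Rabs_pos; lra).
    set (e4 := (d/2) * (- z 1 / 2) / k).
    assert (He4 : 0 < e4) by (unfold e4; apply Rdiv_lt_0_compat; [nra|lra]).
    destruct (Hz (- z 1 / 2)) as [e2 [He2 K2]]; [lra|].
    assert (Ez : ev (fun x => Rabs (z x - z 1) < - z 1 / 2)) by (exists e2; auto).
    assert (E := ev_and _ _ (ev_and _ _ (Hh (d/2) ltac:(lra)) Ez)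
                   (ev_and _ _ (ev_and _ _ (Hqb 1 ltac:(lra)) ev_pos) (ev_near e4 He4))).
    apply (ev_mono _ _ E). intros x Hx [[Ha Hzx] [[Hq' Hp] Hn]].
    assert (Ke : e4 * k = (d/2) * (- z 1 / 2)) by (unfold e4; field; lra).
    apply Rabs_def2 in Ha. apply Rabs_def2 in Hzx.
    assert (qx : 0 < q x) by (apply qpos; lra).
    set (r := - q x / z x). assert (Er : r * (- z x) = q x) by (unfold r; field; lra).
    assert (zxn : z x < 0) by (apply zneg; lra). assert (EE : h x - c - q x / z x = (h x - c) + r) by (unfold r; field; lra). clearbody r. assert (rp : 0 < r) by nra.
    assert (dqk : - dq + 1 <= k) by (unfold k; assert (- dq <= Rabs dq) by (rewrite <- Rabs_Ropp; apply Rle_abs); lra).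
    assert (q x < k * (1 - x)) by (destruct Hq'; assert (0 <= (k - (- dq + 1)) * (1 - x)) by (apply Rmult_le_pos; lra); nra).
    assert (k * (1 - x) < k * e4) by nra.
    assert (r * (- z 1 / 2) < r * (- z x)) by nra.
    assert (r < d / 2) by nra.
    rewrite EE. unfold a0. split; intros; lra.
  -
    assert (z1 : z 1 = 0) by lra. clear z1z z1le.
    assert (Ha0 : a0 = h 1 - c) by reflexivity. clearbody a0.
    assert (Harg : 0 <= a0 ^ 2 - 4 * dq) by nra.
    set (s0 := sqrt (a0 ^ 2 - 4 * dq)).
    assert (Hs0 : s0 * s0 = a0 ^ 2 - 4 * dq) by (apply sqrt_sqrt; auto).
    assert (s0p : 0 <= s0) by apply sqrt_pos.
    assert (Hs0d : s0 = sqrt (a0 ^ 2 - 4 * dq)) by reflexivity. clearbody s0.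
    assert (s0a : a0 <= s0) by nra. assert (s0b : - a0 <= s0) by nra.
    set (lam := (a0 + s0) / 2).
    assert (Hlam : lam = (a0 + s0) / 2) by reflexivity. clearbody lam.
    exists lam. split; [| split; [intros; lra | intros _; split]].
    2: { intros. rewrite Hlam, Hs0d. lra. }
    2: { intros E0. rewrite Hlam, Hs0d, E0.
         replace (a0 ^ 2 - 4 * 0) with (Rsqr a0) by (unfold Rsqr; ring).
         rewrite sqrt_Rsqr_abs. unfold Rmax, Rabs. destruct (Rle_dec 0 a0); destruct (Rcase_abs a0); lra. }
    rewrite z1. apply (fin z (fun x => h x - c - q x / z x)); auto.
    { intros eps He. destruct (Hz eps He) as [eta [H1 H2]]. exists eta; split; auto.
      intros x Hx. rewrite <- z1. auto. }
    intros d Hd.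
    assert (L0 := lam_eq a0 s0 dq lam Hs0 Hlam).
    assert (Hl : 2 * lam = a0 + s0) by lra.
    destruct (key_eq a0 s0 dq lam d L0 Hl) as [key1 key2].
    set (D := lam + d) in *. assert (HD : D = lam + d) by reflexivity. clearbody D.
    set (E := lam - d) in *. assert (HE : E = lam - d) by reflexivity. clearbody E.
    assert (DP : 0 < D) by lra.
    set (eU := d*d/(2*(D+1))).
    assert (HeU : 0 < eU) by (unfold eU; apply Rdiv_lt_0_compat; nra).
    destruct (Rle_or_lt E 0) as [En | Ep].
    + assert (Ev := ev_and _ _ (ev_and _ _ (Hh eU HeU) (Hqb eU HeU)) ev_pos).
      apply (ev_mono _ _ Ev). intros x Hx [[Ha Hqx] Hp].
      assert (zxn : z x < 0) by (apply zneg; lra).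
      assert (qx : 0 < q x) by (apply qpos; lra).
      set (r := - q x / z x). assert (Er : r * (- z x) = q x) by (unfold r; field; lra).
      assert (EE : h x - c - q x / z x = (h x - c) + r) by (unfold r; field; lra).
      clearbody r. assert (rp : 0 < r) by nra. rewrite EE.
      apply Rabs_def2 in Ha. split.
      * intros Hlt. apply (upper_alg (h x - c) a0 r (- z x) (q x) x D d dq s0); auto; try lra.
        all: fold eU. exact (proj2 Hqx). clearbody eU. clear -Ha Ha0. lra.
      * intros Hgt. exfalso. assert (E * (x - 1) >= 0) by nra. lra.
    + assert (s0d : d < s0) by lra.
      set (eL := d*(s0-d)/(2*(E+1))).
      assert (HeL : 0 < eL) by (unfold eL; apply Rdiv_lt_0_compat; nra).
      assert (Ev := ev_and _ _ (ev_and _ _ (ev_and _ _ (Hh eU HeU) (Hqb eU HeU)) ev_pos)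
                    (ev_and _ _ (Hh eL HeL) (Hqb eL HeL))).
      apply (ev_mono _ _ Ev). intros x Hx [[[Ha Hqx] Hp] [Ha2 Hqx2]].
      assert (zxn : z x < 0) by (apply zneg; lra).
      assert (qx : 0 < q x) by (apply qpos; lra).
      set (r := - q x / z x). assert (Er : r * (- z x) = q x) by (unfold r; field; lra).
      assert (EE : h x - c - q x / z x = (h x - c) + r) by (unfold r; field; lra).
      clearbody r. assert (rp : 0 < r) by nra. rewrite EE.
      apply Rabs_def2 in Ha. apply Rabs_def2 in Ha2. split.
      * intros Hlt. apply (upper_alg (h x - c) a0 r (- z x) (q x) x D d dq s0); auto; try lra.
        all: fold eU. exact (proj2 Hqx). clearbody eU. clear -Ha Ha0. lra.
      * intros Hgt. apply Rlt_gt.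
        apply (lower_alg (h x - c) a0 r (- z x) (q x) x E d dq s0); auto; try lra.
        all: fold eL. exact (proj1 Hqx2). clearbody eL. clear -Ha2 Ha0. lra.
Qed.
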